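(* Let $n\ge d+1\ge 3$ be integers and let $\mathcal{F}\subseteq\binom{[n]}{d+1}$. Suppose that for every $F\in\mathcal{F}$ there exists a subset $B_F\subseteq F$ with $|B_F|=d$ such that $F'\cap F\neq B_F$ for every $F'\in\mathcal{F}$. Then $|\mathcal{F}|\le\binom{n-1}{d}$. Moreover, equality holds if and only if $\mathcal{F}$ is a star of size $\binom{n-1}{d}$, i.e. $\mathcal{F}=\{F\in\binom{[n]}{d+1}: a\in F\}$ for some $a\in[n]$.
   Context: $\binom{[n]}{k}$ denotes the family of all $k$-element subsets of $[n]=\{1,\dots,n\}$. A star is a family all of whose members contain a common element. *)

(* Defs.v *)
From mathcomp Require Import all_boot.
Unset Printing Implicit Defensive.

(* The ground set [n] = {1..n} is modelled by 'I_n = {0..n-1}. *)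

Definition binom_fam (n k : nat) : {set {set 'I_n}} := [set A : {set 'I_n} | #|A| == k].

Definition full_star (n k : nat) (a : 'I_n) : {set {set 'I_n}} :=
  [set A : {set 'I_n} | (#|A| == k) && (a \in A)].

(* Main.v *)
Require Import Defs.
From mathcomp Require Import all_boot.
From mathcomp Require Import zify.

Lemma L1 (T : finType) (B F1 F2 : {set T}) d :
  B \subset F1 -> B \subset F2 -> #|B| = d -> #|F1| = d.+1 -> #|F2| = d.+1 ->
  F1 = F2 \/ F1 :&: F2 = B.
Proof.
move=> s1 s2 cB c1 c2.
have sB : B \subset F1 :&: F2 by rewrite subsetI s1 s2.
have h1 : #|F1 :&: F2| <= d.+1 by rewrite -c1; apply: subset_leq_card; apply: subsetIl.
have h2 : d <= #|F1 :&: F2| by rewrite -cB; apply: subset_leq_card.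
have [h|h] : #|F1 :&: F2| = d \/ #|F1 :&: F2| = d.+1 by lia.
  right; apply/esym/eqP; rewrite eqEcard sB /= h cB //.
left.
have e1 : F1 :&: F2 = F1 by apply/eqP; rewrite eqEcard subsetIl h c1 /=.
have e2 : F1 :&: F2 = F2 by apply/eqP; rewrite eqEcard subsetIr h c2 /=.
by rewrite -{1}e1 e2.
Qed.
Arguments L1 {T B F1 F2 d}.

Lemma dcount (U T : finType) (A : {set U}) (f : U -> {set T}) :
  \sum_(u in A) #|f u| = \sum_x #|[set u in A | x \in f u]|.
Proof.
transitivity (\sum_(u in A) \sum_x (x \in f u : nat)).
  apply: eq_bigr => u _; rewrite -sum1_card big_mkcond /=.
  by apply: eq_bigr => x _; case: (x \in f u).
rewrite exchange_big; apply: eq_bigr => x _.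
rewrite -sum1_card big_mkcond /= [RHS]big_mkcond /=.
by apply: eq_bigr => u _; rewrite inE; case: (u \in A); case: (x \in f u).
Qed.

Lemma star_card n d (a : 'I_n) : #|full_star n d.+1 a| = 'C(n.-1, d).
Proof.
have -> : full_star n d.+1 a =
   (fun B => a |: B) @: [set B : {set 'I_n} | B \subset [set~ a] & #|B| == d].
  apply/setP => F; rewrite inE; apply/andP/imsetP.
    move=> [/eqP cF aF]; exists (F :\ a); last by rewrite setD1K.
    rewrite inE; apply/andP; split.
      by apply/subsetP => x; rewrite !inE => /andP [].
    by rewrite (cardsD1 a) aF add1n in cF; case: cF => ->.
  move=> [B]; rewrite inE => /andP [sB /eqP cB] ->.
  have aB : a \notin B by apply/negP => /(subsetP sB); rewrite !inE eqxx.
  by rewrite cardsU1 aB cB setU11.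
rewrite card_in_imset ?cards_draws ?cardsC1 ?card_ord //.
move=> B1 B2; rewrite !inE => /andP [s1 _] /andP [s2 _] e.
have a1 : a \notin B1 by apply/negP => /(subsetP s1); rewrite !inE eqxx.
have a2 : a \notin B2 by apply/negP => /(subsetP s2); rewrite !inE eqxx.
by rewrite -(setU1K a1) e setU1K.
Qed.

Theorem theorem5p1 (n d : nat) (Fam : {set {set 'I_n}}) :
  2 <= d -> d + 1 <= n ->
  Fam \subset binom_fam n d.+1 ->
  (forall F, F \in Fam ->
     exists B : {set 'I_n}, [/\ B \subset F, #|B| = d &
       forall F', F' \in Fam -> F' :&: F != B]) ->
  #|Fam| <= 'C(n.-1, d) /\
  (#|Fam| = 'C(n.-1, d) <-> exists a : 'I_n, Fam = full_star n d.+1 a).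
Proof.
move=> d2 dn Fsub Hex.
have Fc : forall F, F \in Fam -> #|F| = d.+1.
  by move=> F /(subsetP Fsub); rewrite inE => /eqP.
pose P (F B : {set 'I_n}) := [&& B \subset F, #|B| == d &
   [forall F', (F' \in Fam) ==> (F' :&: F != B)]].
pose g (F : {set 'I_n}) := if [pick B | P F B] is Some B then B else set0.
have gP : forall F, F \in Fam -> P F (g F).
  move=> F FF; rewrite /g; case: pickP => [//|none].
  case: (Hex F FF) => B [h1 h2 h3].
  have : P F B.
    rewrite /P h1 h2 eqxx /=; apply/forallP => F'; apply/implyP; exact: h3.
  by rewrite none.
have gsub : forall F, F \in Fam -> g F \subset F.
  by move=> F /gP /and3P [].
have gc : forall F, F \in Fam -> #|g F| = d.
  by move=> F /gP /and3P [_ /eqP].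
have gnot : forall F F', F \in Fam -> F' \in Fam -> F' :&: F != g F.
  by move=> F F' /gP /and3P [_ _ /forallP h] FF'; move: (h F'); rewrite FF'.
have L2 : forall F F', F \in Fam -> F' \in Fam -> g F \subset F' -> F' = F.
  move=> F F' FF FF' s.
  case: (L1 s (gsub F FF) (gc F FF) (Fc F' FF') (Fc F FF)) => // h.
  by move: (gnot F F' FF FF'); rewrite h eqxx.
have ginj : {in Fam &, injective g}.
  move=> F1 F2 h1 h2 e; apply: L2 => //; rewrite -e; exact: gsub.
pose e (B : {set 'I_n}) := [set x | (x \notin B) && (x |: B \in Fam)].
have eC : forall B : {set 'I_n}, e B \subset ~: B.
  by move=> B; apply/subsetP => x; rewrite !inE => /andP [].
have cC : forall B : {set 'I_n}, #|~: B| = n - #|B|.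
  by move=> B; have := cardsC B; rewrite card_ord; lia.
have eS : forall F, F \in Fam -> e (g F) \subset F :\: g F.
  move=> F FF; apply/subsetP => x; rewrite !inE => /andP [xg xF].
  rewrite xg /=.
  have -> : F = x |: g F by apply: esym; apply: L2 => //; apply: subsetUr.
  by rewrite setU11.
have FD1 : forall F, F \in Fam -> #|F :\: g F| = 1.
  move=> F FF; rewrite cardsD (setIidPr (gsub F FF)) Fc // gc //; lia.
have eS1 : forall F, F \in Fam -> #|e (g F)| <= 1.
  by move=> F FF; rewrite -(FD1 F FF); apply: subset_leq_card; apply: eS.
pose D := binom_fam n d.
pose S := g @: Fam.
have SD : S \subset D.
  by apply/subsetP => B /imsetP [F FF ->]; rewrite inE gc.
have cS : #|S| = #|Fam| by apply: card_in_imset.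
have cD : #|D| = 'C(n, d) by rewrite card_draws card_ord.
have dc : \sum_(B in D) #|e B| = d.+1 * #|Fam|.
  have -> : d.+1 * #|Fam| = \sum_(F in Fam) #|id F|.
    rewrite mulnC -sum_nat_const; apply: eq_bigr => F FF; exact/esym/Fc.
  rewrite !dcount; apply: eq_bigr => x _.
  have -> : [set B in D | x \in e B] =
      (fun F => F :\ x) @: [set F in Fam | x \in id F].
    apply/setP => B; apply/idP/idP.
      rewrite inE => /andP [_]; rewrite inE => /andP [xB xF]; apply/imsetP.
      exists (x |: B); first by rewrite inE xF setU11.
      by rewrite setU1K.
    move=> /imsetP [F /setIdP [FF xF] ->].
    rewrite !inE eqxx /= setD1K // FF andbT.
    by have := Fc F FF; rewrite (cardsD1 x) xF add1n => -[->].
  rewrite card_in_imset //.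
  move=> F1 F2; rewrite !inE => /andP [_ x1] /andP [_ x2] h.
  by rewrite -(setD1K x1) h setD1K.
have spl : \sum_(B in D) #|e B| = \sum_(B in S) #|e B| + \sum_(B in D :\: S) #|e B|.
  by rewrite (big_setID S) (setIidPr SD).
have s1 : \sum_(B in S) #|e B| <= #|Fam|.
  rewrite -cS -sum1_card; apply: leq_sum => B /imsetP [F FF ->]; exact: eS1.
have eB : forall B, B \in D -> #|e B| <= n - d.
  move=> B; rewrite inE => /eqP cB; rewrite -cB -cC; apply: subset_leq_card; exact: eC.
have s2 : \sum_(B in D :\: S) #|e B| <= ('C(n, d) - #|Fam|) * (n - d).
  have -> : 'C(n, d) - #|Fam| = #|D :\: S| by rewrite cardsD (setIidPr SD) cD cS.
  rewrite -sum_nat_const; apply: leq_sum => B; rewrite inE => /andP [_ BD]; exact: eB.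
have NC : #|Fam| <= 'C(n, d) by rewrite -cD -cS; apply: subset_leq_card.
have key := mul_bin_down n d.
have h : d.+1 * #|Fam| <= #|Fam| + ('C(n, d) - #|Fam|) * (n - d).
  by rewrite -dc spl; apply: leq_add.
have bound : #|Fam| <= 'C(n.-1, d).
  move: h key NC; rewrite mulnBl.
  move: #|Fam| ('C(n, d)) ('C(n.-1, d)) => N c C1.
  have [m ->] : exists m, n = d + m by exists (n - d); lia.
  rewrite addKn => h key NC.
  have : (d + m) * N <= (d + m) * C1 by nia.
  rewrite leq_pmul2l //; lia.
split => //; split; last by move=> [a ->]; exact: star_card.
move=> eqN.
have s2eq : \sum_(B in D :\: S) #|e B| = \sum_(B in D :\: S) (n - d).
  rewrite sum_nat_const; apply/eqP; rewrite eqn_leq.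
  have -> : #|D :\: S| = 'C(n, d) - #|Fam| by rewrite cardsD (setIidPr SD) cD cS.
  rewrite s2 /=.
  move: dc; rewrite spl => dc.
  move: s1 s2 dc key NC eqN; rewrite mulnBl.
  move: (\sum_(B in S) #|e B|) (\sum_(B in D :\: S) #|e B|) => x y.
  move: #|Fam| ('C(n, d)) ('C(n.-1, d)) => N c C1.
  have [m ->] : exists m, n = d + m by exists (n - d); lia.
  rewrite addKn => s1 s2 dc key NC eqN.
  nia.
have full : forall B : {set 'I_n}, #|B| = d -> B \notin S -> forall x, x \notin B -> x |: B \in Fam.
  move=> B cB BS x xB.
  have BD : B \in D by rewrite inE cB.
  have prem : forall i, i \in D :\: S -> #|e i| <= n - d ?= iff (#|e i| == n - d).
    move=> i; rewrite inE => /andP [_ iD]; split; [exact: eB | by []].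
  have r := leqif_sum prem.
  have : #|e B| == n - d.
    move: r.2; rewrite s2eq eqxx => /esym/forallP/(_ B).
    by rewrite inE BS BD.
  move=> /eqP ceB.
  have eBC : e B = ~: B by apply/eqP; rewrite eqEcard eC cC ceB cB leqnn.
  have : x \in e B by rewrite eBC inE.
  by rewrite inE => /andP [].
have N0 : 0 < #|Fam| by rewrite eqN bin_gt0; lia.
have [F0 F0F] : exists F0, F0 \in Fam by apply/set0Pn; rewrite -card_gt0.
have [a Ha] : exists a, F0 :\: g F0 = [set a] by apply/cards1P; rewrite FD1.
have : a \in F0 :\: g F0 by rewrite Ha set11.
rewrite inE => /andP [aB0 aF0].
have F0e : a |: g F0 = F0.
  apply/eqP; rewrite eqEcard subUset sub1set aF0 gsub //= cardsU1 aB0 gc // Fc //.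
pose Q (B : {set 'I_n}) := (a |: B \in Fam) && (g (a |: B) == B).
have QB0 : Q (g F0) by rewrite /Q F0e F0F eqxx.
have partner : forall B, Q B -> forall u, u \notin B -> u |: B \in Fam -> u |: B = a |: B.
  move=> B /andP [aBF /eqP gB] u uB uF; apply: L2 => //; rewrite gB; exact: subsetUr.
have onlyS : forall B F, B \in S -> F \in Fam -> B \subset F -> g F = B.
  by move=> B F /imsetP [F' F'F ->] FF sBF; rewrite (L2 F' F F'F FF sBF).
have step : forall B, Q B -> a \notin B -> #|B| = d -> forall e0 u,
    e0 \in B -> u \notin B -> u != a -> Q (u |: (B :\ e0)).
  move=> B QB aB cB e0 u e0B uB ua.
  have [aBF gB] : a |: B \in Fam /\ g (a |: B) = B by case/andP: QB => ? /eqP.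
  have aE : a \notin B :\ e0 by rewrite inE negb_and aB orbT.
  have uE : u \notin B :\ e0 by rewrite inE negb_and uB orbT.
  have cE : #|B :\ e0|.+1 = d by have := cardsD1 e0 B; rewrite e0B cB add1n.
  have cAE : #|a |: (B :\ e0)| = d by rewrite cardsU1 aE.
  have AEnS : a |: (B :\ e0) \notin S.
    apply/negP => AES.
    have := onlyS _ _ AES aBF (setUS _ (subD1set B e0)); rewrite gB => hh.
    by move: aB; rewrite hh setU11.
  have F2 : u |: (a |: (B :\ e0)) \in Fam.
    by apply: full => //; rewrite in_setU1 negb_or ua uE.
  have cUE : #|u |: (B :\ e0)| = d by rewrite cardsU1 uE.
  have UES : u |: (B :\ e0) \in S.
    apply/negPn/negP => nS.
    have e0n : e0 \notin u |: (B :\ e0).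
      rewrite in_setU1 negb_or !inE eqxx /= andbT.
      by apply/eqP => hh; move: uB; rewrite -hh e0B.
    have := full _ cUE nS e0 e0n; rewrite setUCA setD1K // => hh.
    have h2 := partner B QB u uB hh.
    have : u \in a |: B by rewrite -h2 setU11.
    by rewrite in_setU1 (negbTE ua) (negbTE uB).
  rewrite /Q setUCA F2 /=; apply/eqP; apply: onlyS => //.
  by apply: setUS; apply: subsetUr.
have ind : forall k (B : {set 'I_n}), #|B| = d -> a \notin B -> #|B :\: g F0| <= k -> Q B.
  elim=> [|k IH] B cB aB.
    rewrite leqn0 cards_eq0 setD_eq0 => sB.
    have -> : B = g F0 by apply/eqP; rewrite eqEcard sB (gc F0 F0F) cB leqnn.
    exact: QB0.
  move=> hk; case: (leqP #|B :\: g F0| k) => hk'; first exact: IH.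
  have [u uBB] : exists u, u \in B :\: g F0 by apply/set0Pn; rewrite -card_gt0; clear -hk'; lia.
  have [e0 eBB] : exists e0, e0 \in g F0 :\: B.
    apply/set0Pn; rewrite -card_gt0.
    have h1 := cardsD B (g F0); have h2 := cardsD (g F0) B.
    rewrite setIC (gc F0 F0F) in h2; rewrite cB in h1; clear -h1 h2 hk'; lia.
  move: uBB eBB; rewrite !inE => /andP [uB0 uB] /andP [eBn eB0].
  have e0n : e0 \notin B :\ u by rewrite !inE (negbTE eBn) andbF.
  have cB1 : #|e0 |: (B :\ u)| = d.
    rewrite cardsU1 e0n; have h1 := cardsD1 u B; rewrite uB cB in h1; clear -h1; lia.
  have aB1 : a \notin e0 |: (B :\ u).
    rewrite in_setU1 negb_or !inE (negbTE aB) !andbF andbT.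
    by apply/eqP => hh; move: eB0; rewrite -hh (negbTE aB0).
  have sub : (e0 |: (B :\ u)) :\: g F0 \subset (B :\: g F0) :\ u.
    apply/subsetP => x; rewrite !inE => /andP [xB0 /orP [/eqP xe | /andP [xu xB]]].
      by move: xB0; rewrite xe eB0.
    by rewrite xu xB0 xB.
  have c1 : #|(e0 |: (B :\ u)) :\: g F0| <= k.
    apply: leq_trans (subset_leq_card sub) _.
    have h1 := cardsD1 u (B :\: g F0); rewrite inE uB0 uB add1n in h1; clear -h1 hk; lia.
  have QB1 := IH _ cB1 aB1 c1.
  have ue : u != e0 by apply/eqP => hh; move: eBn; rewrite -hh uB.
  have := step _ QB1 aB1 cB1 e0 u (setU11 _ _) _ _.
  rewrite setU1K // setD1K //; apply.
    by rewrite in_setU1 negb_or ue !inE eqxx.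
  by apply/eqP => hh; move: aB; rewrite -hh uB.
exists a; apply/setP => F; rewrite inE; apply/idP/idP.
  move=> FF; rewrite Fc // eqxx /=.
  have [x xF] : exists x, x \in F by apply/set0Pn; rewrite -card_gt0 Fc.
  have cB : #|F :\ x| = d by have := cardsD1 x F; rewrite xF Fc // add1n => -[].
  case aF: (a \in F) => //.
  have aB : a \notin F :\ x by rewrite inE aF andbF.
  have QB := ind _ _ cB aB (leqnn _).
  have xB : x \notin F :\ x by rewrite !inE eqxx.
  have := partner _ QB x xB; rewrite setD1K // => hh.
  have : a \in F by rewrite (hh FF) setU11.
  by rewrite aF.
move=> /andP [/eqP cF aF].
have cB : #|F :\ a| = d by have := cardsD1 a F; rewrite aF cF add1n => -[].
have aB : a \notin F :\ a by rewrite !inE eqxx.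
have := ind _ _ cB aB (leqnn _).
by rewrite /Q setD1K // => /andP [].
Qed.
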